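(* Let $0<|q|<1$, let $m$ be a nonnegative integer, and let $a,b,c,d$ be complex numbers such that all denominators below are nonzero and $|cq^{-m}/(ab)|<1$. Then \[ {}_3\phi_2\!\left[\begin{matrix}a,b,dq^m\\ c,d\end{matrix};q,\frac{cq^{-m}}{ab}\right]= \frac{(c/a;q)_\infty(c/b;q)_\infty}{(c;q)_\infty(c/ab;q)_\infty}\, {}_3\phi_2\!\left[\begin{matrix}a,b,q^{-m}\\ abq/c,d\end{matrix};q,q\right]. \]
   Context: For $0<|q|<1$: $(a;q)_\infty=\prod_{j\ge0}(1-aq^j)$ and $(a;q)_k=(a;q)_\infty/(aq^k;q)_\infty$ for integers $k$. The basic hypergeometric series is ${}_r\phi_{r-1}\!\left[\begin{matrix}a_1,\dots,a_r\\ b_1,\dots,b_{r-1}\end{matrix};q,z\right]=\sum_{k\ge0}\frac{(a_1;q)_k\cdots(a_r;q)_k}{(q;q)_k(b_1;q)_k\cdots(b_{r-1};q)_k}z^k$ (it terminates if some numerator parameter equals $q^{-n}$, $n$ a nonnegative integer). *)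

(* Defs.v *)
From Stdlib Require Import Reals.
From Coquelicot Require Export Coquelicot Complex.
Open Scope C_scope.

Fixpoint qpoch (a q : C) (k : nat) : C :=
  match k with
  | O => 1
  | S k' => qpoch a q k' * (1 - a * pow_n q k')
  end.

Definition is_qpoch_inf (a q P : C) : Prop :=
  filterlim (fun n : nat => qpoch a q n) eventually (locally P).

Definition phi32_term (a1 a2 a3 b1 b2 q z : C) (k : nat) : C :=
  (qpoch a1 q k * qpoch a2 q k * qpoch a3 q k)
  / (qpoch q q k * qpoch b1 q k * qpoch b2 q k) * pow_n z k.

(* Main.v *)
Require Import Defs.
From Stdlib Require Import Reals Lra Lia ClassicalEpsilon.
From Coquelicot Require Import Coquelicot Complex.
Open Scope C_scope.

Definition cv (u : nat -> C) (L : C) := is_lim_seq (fun n => Cmod (u n - L)) 0%R.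

Lemma cv_filterlim u L : cv u L -> filterlim u eventually (locally L).
Proof.
  intros H. apply filterlim_locally. intros eps.
  apply is_lim_seq_spec in H. destruct (H eps) as [N HN]. exists N. intros n Hn.
  apply (@norm_compat1 C_AbsRing C_NormedModule). specialize (HN n Hn). rewrite Rminus_0_r in HN.
  rewrite Rabs_pos_eq in HN by apply Cmod_ge_0. exact HN.
Qed.

Lemma filterlim_cv u L : filterlim u eventually (locally L) -> cv u L.
Proof.
  intros H. apply is_lim_seq_spec. intros eps.
  assert (Hnf := @norm_factor_gt_0 C_AbsRing C_NormedModule).
  assert (He : (0 < eps / norm_factor)%R) by (apply Rdiv_lt_0_compat; [apply cond_pos| exact Hnf]).
  destruct (proj1 (filterlim_locally u L) H (mkposreal _ He)) as [N HN]. exists N.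
  intros n Hn. specialize (HN n Hn). apply (@norm_compat2 C_AbsRing C_NormedModule) in HN. simpl in HN.
  rewrite Rminus_0_r, Rabs_pos_eq by apply Cmod_ge_0.
  assert (E : Cmod (u n - L) = norm (minus (u n) L)) by reflexivity. rewrite E.
  eapply Rlt_le_trans. exact HN. right. field. apply Rgt_not_eq. exact Hnf.
Qed.

Lemma cv_ext (u v : nat -> C) (L : C) : (forall n, u n = v n) -> cv u L -> cv v L.
Proof. intros E H. unfold cv. eapply is_lim_seq_ext; [|exact H]. intros n; simpl; now rewrite E. Qed.

Lemma cv_const (L : C) : cv (fun _ => L) L.
Proof. unfold cv. eapply is_lim_seq_ext; [|apply is_lim_seq_const]. intros n; simpl.
  replace (L - L) with (RtoC 0) by ring. now rewrite Cmod_0. Qed.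

Lemma lim0_le (u v : nat -> R) : (forall n, 0 <= u n <= v n)%R -> is_lim_seq v 0%R -> is_lim_seq u 0%R.
Proof. intros H Hv. apply is_lim_seq_le_le with (fun _ => 0%R) v; auto. apply is_lim_seq_const. Qed.

Lemma lim0_le_loc (u v : nat -> R) : eventually (fun n => 0 <= u n <= v n)%R -> is_lim_seq v 0%R -> is_lim_seq u 0%R.
Proof. intros H Hv. apply is_lim_seq_le_le_loc with (fun _ => 0%R) v; auto. apply is_lim_seq_const. Qed.

Lemma cv_plus (u v : nat -> C) (L M : C) : cv u L -> cv v M -> cv (fun n => u n + v n) (L + M).
Proof.
  unfold cv. intros Hu Hv.
  apply lim0_le with (fun n => Cmod (u n - L) + Cmod (v n - M))%R.
  - intros n; split; [apply Cmod_ge_0|].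
    replace (u n + v n - (L + M)) with ((u n - L) + (v n - M)) by ring. apply Cmod_triangle.
  - replace 0%R with (0 + 0)%R by ring. now apply is_lim_seq_plus'.
Qed.

Lemma cv_mult (u v : nat -> C) (L M : C) : cv u L -> cv v M -> cv (fun n => u n * v n) (L * M).
Proof.
  unfold cv. intros Hu Hv.
  apply lim0_le with (fun n => Cmod (u n - L) * Cmod (v n - M) + Cmod L * Cmod (v n - M) + Cmod M * Cmod (u n - L))%R.
  - intros n; split; [apply Cmod_ge_0|].
    replace (u n * v n - L * M) with ((u n - L) * (v n - M) + L * (v n - M) + M * (u n - L)) by ring.
    eapply Rle_trans; [apply Cmod_triangle|]. rewrite !Cmod_mult.
    apply Rplus_le_compat_r. eapply Rle_trans; [apply Cmod_triangle|]. rewrite !Cmod_mult. lra.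
  - replace 0%R with (0 * 0 + Cmod L * 0 + Cmod M * 0)%R by ring.
    apply is_lim_seq_plus'; [apply is_lim_seq_plus'|].
    + now apply is_lim_seq_mult'.
    + apply is_lim_seq_mult'; auto. apply is_lim_seq_const.
    + apply is_lim_seq_mult'; auto. apply is_lim_seq_const.
Qed.

Lemma Cmod_rev_tri (x y : C) : (Cmod x - Cmod y <= Cmod (x - y))%R.
Proof. assert (H := Cmod_triangle (x - y) y). replace (x - y + y) with x in H by ring. lra. Qed.

Lemma cv_inv (u : nat -> C) (L : C) : L <> 0 -> (forall n, u n <> 0) -> cv u L -> cv (fun n => / u n) (/ L).
Proof.
  unfold cv. intros HL Hu H.
  assert (HL0 : (0 < Cmod L)%R) by (apply Cmod_gt_0; exact HL).
  apply lim0_le_loc with (fun n => (2 / (Cmod L * Cmod L)) * Cmod (u n - L))%R.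
  - apply is_lim_seq_spec in H. assert (He : (0 < Cmod L / 2)%R) by lra.
    destruct (H (mkposreal _ He)) as [N HN]. exists N. intros n Hn. specialize (HN n Hn).
    simpl in HN. rewrite Rminus_0_r, Rabs_pos_eq in HN by apply Cmod_ge_0.
    assert (Hun : (Cmod L / 2 <= Cmod (u n))%R).
    { assert (T := Cmod_rev_tri L (u n)). replace (L - u n) with (- (u n - L)) in T by ring.
      rewrite Cmod_opp in T. lra. }
    split; [apply Cmod_ge_0|].
    replace (/ u n - / L) with (- (u n - L) / (u n * L)) by (field; auto).
    rewrite Cmod_div by (apply Cmult_neq_0; auto). rewrite Cmod_opp, Cmod_mult.
    unfold Rdiv. rewrite Rmult_comm. apply Rmult_le_compat_r; [apply Cmod_ge_0|].
    assert (0 < Cmod (u n))%R by lra.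
    apply Rle_trans with (/ (Cmod L / 2 * Cmod L))%R.
    + apply Rinv_le_contravar. apply Rmult_lt_0_compat; lra. apply Rmult_le_compat_r; lra.
    + right. field. apply Rgt_not_eq. exact HL0.
  - replace 0%R with ((2 / (Cmod L * Cmod L)) * 0)%R by ring. apply is_lim_seq_mult'; auto. apply is_lim_seq_const.
Qed.

Lemma cv_unique (u : nat -> C) (L M : C) : cv u L -> cv u M -> L = M.
Proof.
  unfold cv. intros HL HM.
  assert (T : Rbar_le (Cmod (L - M)) (0 + 0)%R).
  { apply is_lim_seq_le with (fun _ => Cmod (L - M)) (fun n => Cmod (u n - L) + Cmod (u n - M))%R.
    - intros n. replace (L - M) with (- (u n - L) + (u n - M)) by ring.
      eapply Rle_trans; [apply Cmod_triangle|]. rewrite Cmod_opp. lra.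
    - apply is_lim_seq_const.
    - now apply is_lim_seq_plus'. }
  simpl in T. assert (Cmod (L - M) = 0%R) by (generalize (Cmod_ge_0 (L - M)); lra).
  apply Cmod_eq_0 in H. replace M with (L - (L - M)) by ring. rewrite H. ring.
Qed.

Lemma cv_shift (u : nat -> C) (L : C) j : cv (fun n => u (n + j)%nat) L -> cv u L.
Proof. unfold cv. intros H. apply (is_lim_seq_incr_n _ j). exact H. Qed.

Lemma pn (x : C) n : pow_n x n = x ^ n.
Proof. induction n. reflexivity. simpl. rewrite <- IHn. reflexivity. Qed.

Lemma qpochS a q k : qpoch a q (S k) = qpoch a q k * (1 - a * q ^ k).
Proof. simpl. now rewrite pn. Qed.
Lemma qpoch0 a q : qpoch a q 0 = 1.
Proof. reflexivity. Qed.

Lemma qpoch_add x q j k : qpoch x q (j + k) = qpoch x q j * qpoch (x * q ^ j) q k.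
Proof. induction k. rewrite Nat.add_0_r, qpoch0. ring.
  rewrite Nat.add_succ_r, !qpochS, IHk, Cpow_add_r. ring. Qed.

Lemma qpoch_factor x q k i : qpoch x q k <> 0 -> (i < k)%nat -> 1 - x * q ^ i <> 0.
Proof. intros H Hi. induction k. lia. rewrite qpochS in H.
  destruct (Nat.eq_dec i k). subst. intro E; apply H; rewrite E; ring.
  apply IHk; [intro E; apply H; rewrite E; ring | lia]. Qed.

Lemma qpoch_nz x q k : (forall i, (i < k)%nat -> 1 - x * q ^ i <> 0) -> qpoch x q k <> 0.
Proof. induction k; intros H. rewrite qpoch0. intro E; injection E; lra.
  rewrite qpochS. apply Cmult_neq_0. apply IHk. intros; apply H; lia. apply H; lia. Qed.

Fixpoint psum (f : nat -> C) (n : nat) : C :=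
  match n with O => 0 | S n => psum f n + f n end.

Definition ser (f : nat -> C) (L : C) := cv (psum f) L.

Lemma sum_n_psum (f : nat -> C) n : sum_n f n = psum f (S n).
Proof. induction n. rewrite sum_O. simpl. ring.
  rewrite sum_Sn, IHn. reflexivity. Qed.

Lemma ser_is_series (f : nat -> C) L : ser f L -> is_series f L.
Proof. intros H. unfold is_series. apply cv_filterlim.
  unfold ser, cv in *. apply (is_lim_seq_incr_1) in H.
  eapply is_lim_seq_ext; [|exact H]. intros n. simpl. now rewrite sum_n_psum. Qed.

Lemma is_series_ser (f : nat -> C) L : is_series f L -> ser f L.
Proof. intros H. apply filterlim_cv in H. unfold ser, cv in *.
  apply (is_lim_seq_incr_1). eapply is_lim_seq_ext; [|exact H]. intros n. simpl.
  now rewrite sum_n_psum. Qed.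

Lemma psum_ext (f g : nat -> C) n : (forall k, (k < n)%nat -> f k = g k) -> psum f n = psum g n.
Proof. induction n; intros H; simpl. reflexivity. rewrite IHn. rewrite H by lia. reflexivity. intros; apply H; lia. Qed.

Lemma ser_ext (f g : nat -> C) L : (forall k, f k = g k) -> ser f L -> ser g L.
Proof. intros E H. unfold ser. eapply cv_ext; [|exact H]. intros n. apply psum_ext. auto. Qed.

Lemma ser_plus (f g : nat -> C) L M : ser f L -> ser g M -> ser (fun k => f k + g k) (L + M).
Proof. intros Hf Hg. unfold ser. eapply cv_ext; [|apply (cv_plus _ _ _ _ Hf Hg)].
  intros n. induction n; simpl. ring. rewrite <- IHn. ring. Qed.

Lemma ser_scal (f : nat -> C) L c : ser f L -> ser (fun k => c * f k) (c * L).
Proof. intros Hf. unfold ser. eapply cv_ext; [|apply (cv_mult _ _ _ _ (cv_const c) Hf)].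
  intros n. induction n; simpl. ring. rewrite <- IHn. ring. Qed.

Lemma ser_unique (f : nat -> C) L M : ser f L -> ser f M -> L = M.
Proof. apply cv_unique. Qed.

Lemma ser_finite (f : nat -> C) N : (forall k, (N <= k)%nat -> f k = 0) -> ser f (psum f N).
Proof. intros H. unfold ser, cv. apply is_lim_seq_incr_n with N.
  eapply is_lim_seq_ext; [|apply is_lim_seq_const]. intros n. simpl.
  assert (E : psum f (n + N) = psum f N).
  { induction n. reflexivity. simpl. rewrite IHn. rewrite H. ring. lia. }
  rewrite E. replace (psum f N - psum f N) with (RtoC 0) by ring. now rewrite Cmod_0. Qed.

Lemma ser_shift (f g : nat -> C) j L : (forall k, (k < j)%nat -> g k = 0) -> (forall l, g (l + j)%nat = f l) ->
  ser f L -> ser g L.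
Proof. intros H0 H1 Hf. unfold ser. apply cv_shift with j.
  eapply cv_ext; [|exact Hf]. intros n.
  assert (E0 : forall i, (i <= j)%nat -> psum g i = 0).
  { induction i; intros Hi. reflexivity. simpl. rewrite IHi by lia. rewrite H0 by lia. ring. }
  specialize (E0 j (le_n j)).
  induction n. simpl. now rewrite E0. simpl. rewrite IHn, H1. reflexivity. Qed.

Lemma ser_fsum (F : nat -> nat -> C) (V : nat -> C) M : (forall j, ser (F j) (V j)) ->
  ser (fun k => psum (fun j => F j k) M) (psum V M).
Proof. intros H. induction M; simpl.
  - apply ser_ext with (fun _ => 0). reflexivity. unfold ser. eapply cv_ext; [|apply cv_const].
    intros n; induction n; simpl; [reflexivity| rewrite <- IHn; ring].
  - apply ser_plus; auto. Qed.

Lemma ser_telescope (D : nat -> C) : cv D 0 -> ser (fun l => D l - D (S l)) (D 0%nat).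
Proof. intros H. unfold ser. apply cv_ext with (fun n => D 0%nat - D n).
  - intros n; induction n; simpl. ring. rewrite <- IHn. ring.
  - assert (Hc := cv_plus _ _ _ _ (cv_const (D 0%nat)) (cv_mult _ _ _ _ (cv_const (-1)) H)).
    replace (D 0%nat + -1 * 0) with (D 0%nat) in Hc by ring. eapply cv_ext; [|exact Hc]. intros; simpl; ring. Qed.

Lemma ser_exists (f : nat -> C) : ex_series (fun n => Cmod (f n)) -> exists L, ser f L.
Proof. intros H. assert (E : ex_series (V := C_CompleteNormedModule) f).
  { apply ex_series_le with (fun n => Cmod (f n)). intros n. right. reflexivity. exact H. }
  destruct E as [L HL]. exists L. now apply is_series_ser. Qed.

Lemma cv_of_Cmod (u : nat -> C) : is_lim_seq (fun n => Cmod (u n)) 0%R -> cv u 0.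
Proof. intros H. unfold cv. eapply is_lim_seq_ext; [|exact H]. intros n. simpl. f_equal. ring. Qed.

Lemma ser_term0 (f : nat -> C) : ex_series (fun n => Cmod (f n)) -> cv f 0.
Proof. intros H. apply cv_of_Cmod. now apply ex_series_lim_0. Qed.

Lemma geom_bound (f : nat -> C) (rho : R) N :
  (0 <= rho < 1)%R -> (forall l, (N <= l)%nat -> (Cmod (f (S l)) <= rho * Cmod (f l))%R) ->
  ex_series (fun n => Cmod (f n)).
Proof.
  intros Hr H. apply (ex_series_incr_n _ N).
  apply (@ex_series_le R_AbsRing R_CompleteNormedModule) with (fun k => Cmod (f N) * rho ^ k)%R.
  - intros k. change (norm (Cmod (f (N + k)%nat))) with (Rabs (Cmod (f (N + k)%nat))).
    rewrite Rabs_pos_eq by apply Cmod_ge_0. induction k.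
    + rewrite Nat.add_0_r. simpl. lra.
    + rewrite Nat.add_succ_r. eapply Rle_trans. apply H. lia.
      simpl. assert (0 <= Cmod (f N))%R by apply Cmod_ge_0.
      replace (Cmod (f N) * (rho * rho ^ k))%R with (rho * (Cmod (f N) * rho ^ k))%R by ring.
      apply Rmult_le_compat_l; lra.
  - exists (Cmod (f N) * / (1 - rho))%R. apply (@is_series_scal_l R_AbsRing R_NormedModule).
    apply is_series_geom. rewrite Rabs_pos_eq; lra.
Qed.

Lemma ratio_cv (f r : nat -> C) (z : C) :
  (Cmod z < 1)%R -> cv r z -> (forall l, f (S l) = r l * f l) -> ex_series (fun n => Cmod (f n)).
Proof.
  intros Hz Hr Hf. set (rho := ((1 + Cmod z) / 2)%R).
  assert (He : (0 < (1 - Cmod z) / 2)%R) by lra.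
  unfold cv in Hr. apply is_lim_seq_spec in Hr. destruct (Hr (mkposreal _ He)) as [N HN].
  apply geom_bound with rho N. assert (0 <= Cmod z)%R by apply Cmod_ge_0. unfold rho; lra.
  intros l Hl. rewrite Hf, Cmod_mult. apply Rmult_le_compat_r. apply Cmod_ge_0.
  specialize (HN l Hl). simpl in HN. rewrite Rminus_0_r, Rabs_pos_eq in HN by apply Cmod_ge_0.
  assert (T := Cmod_triangle (r l - z) z). replace (r l - z + z) with (r l) in T by ring.
  unfold rho; lra.
Qed.

Lemma sum_n_le_lim (b : nat -> R) B : (forall n, 0 <= b n)%R -> is_series b B -> forall n, (sum_n b n <= B)%R.
Proof.
  intros Hb H n.
  assert (T : Rbar_le (sum_n b n) B).
  { apply is_lim_seq_le with (fun _ => sum_n b n) (fun k => sum_n b (k + n)).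
    - intros k. induction k. simpl. lra. simpl. rewrite sum_Sn. change (plus ?x ?y) with (x + y)%R.
      specialize (Hb (S (k + n))). lra.
    - apply is_lim_seq_const.
    - apply (is_lim_seq_incr_n (sum_n b) n B). exact H. }
  exact T.
Qed.

Lemma norm_bound (f : nat -> C) L (b : nat -> R) B :
  ser f L -> (forall n, Cmod (f n) <= b n)%R -> is_series b B -> (Cmod L <= B)%R.
Proof.
  intros Hf Hb HB.
  assert (Hb0 : forall n, (0 <= b n)%R). { intros n. eapply Rle_trans. apply Cmod_ge_0. apply Hb. }
  assert (Hp : forall n, (Cmod (psum f n) <= B)%R).
  { intros n. assert (Hs := sum_n_le_lim b B Hb0 HB).
    destruct n. simpl. rewrite Cmod_0. specialize (Hs 0%nat). rewrite sum_O in Hs. specialize (Hb0 0%nat). lra.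
    eapply Rle_trans; [|apply (Hs n)]. clear Hs. induction n.
    simpl. rewrite sum_O. replace (0 + f 0%nat) with (f 0%nat) by ring. apply Hb.
    change (Cmod (psum f (S n) + f (S n)) <= sum_n b (S n))%R. rewrite sum_Sn.
    change (plus ?x ?y) with (x + y)%R. eapply Rle_trans. apply Cmod_triangle. specialize (Hb (S n)). lra. }
  unfold ser, cv in Hf.
  assert (T : Rbar_le (Cmod L) (0 + B)%R).
  { apply is_lim_seq_le with (fun _ => Cmod L) (fun n => Cmod (psum f n - L) + B)%R.
    - intros n. assert (T := Cmod_triangle (- (psum f n - L)) (psum f n)).
      replace (- (psum f n - L) + psum f n) with L in T by ring. rewrite Cmod_opp in T.
      specialize (Hp n). lra.
    - apply is_lim_seq_const.
    - apply is_lim_seq_plus'. exact Hf. apply is_lim_seq_const. }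
  simpl in T. lra.
Qed.

Lemma C1_neq_0 : (RtoC 1) <> 0.
Proof. intro E; injection E; lra. Qed.

Lemma rpow_le1 (r : R) n : (0 <= r <= 1)%R -> (0 <= r ^ n <= 1)%R.
Proof. intros H; induction n; simpl; [lra|]. split. apply Rmult_le_pos; lra.
  replace 1%R with (1 * 1)%R by ring. apply Rmult_le_compat; lra. Qed.

Lemma rpow_anti (r : R) j m : (0 <= r <= 1)%R -> (j <= m)%nat -> (r ^ m <= r ^ j)%R.
Proof. intros H Hj. replace m with (j + (m - j))%nat by lia. rewrite pow_add.
  assert (A := rpow_le1 r j H). assert (B := rpow_le1 r (m - j) H).
  replace (r ^ j)%R with (r ^ j * 1)%R at 2 by ring. apply Rmult_le_compat_l; lra. Qed.

Section Q.
Variable q : C.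
Hypothesis Hq0 : (0 < Cmod q)%R.
Hypothesis Hq1 : (Cmod q < 1)%R.

Lemma q_nz : q <> 0.
Proof. intro E. rewrite E, Cmod_0 in Hq0. lra. Qed.

Lemma one_minus_nz (x : C) : (Cmod x < 1)%R -> 1 - x <> 0.
Proof. intros H E. assert (E2 : x = 1) by (replace x with (1 - (1 - x)) by ring; rewrite E; ring).
  rewrite E2, Cmod_1 in H. lra. Qed.

Lemma Cmod_qpow n : (Cmod (q ^ n) = Cmod q ^ n)%R.
Proof. apply Cmod_pow. Qed.

Lemma qq_nz l : qpoch q q l <> 0.
Proof. apply qpoch_nz. intros i _. apply one_minus_nz. rewrite <- Cpow_S, Cmod_pow.
  apply pow_lt_1_compat. split; [apply Cmod_ge_0|lra]. lia. Qed.

Lemma cv_qpow : cv (fun l => q ^ l) 0.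
Proof. apply cv_of_Cmod. eapply is_lim_seq_ext; [|apply (is_lim_seq_geom (Cmod q))].
  intros n; simpl. now rewrite Cmod_pow. rewrite Rabs_pos_eq; lra. Qed.

Lemma cv_lin (x : C) : cv (fun l => 1 - x * q ^ l) 1.
Proof. assert (H := cv_plus _ _ _ _ (cv_const 1) (cv_mult _ _ _ _ (cv_const (- x)) cv_qpow)).
  replace (1 + - x * 0) with (RtoC 1) in H by ring. eapply cv_ext; [|exact H]. intros; simpl; ring. Qed.

Definition T2 (a b c z : C) (l : nat) : C :=
  qpoch a q l * qpoch b q l / (qpoch q q l * qpoch c q l) * z ^ l.

Definition rat2 (a b c z : C) (l : nat) : C :=
  (1 - a * q ^ l) * (1 - b * q ^ l) / ((1 - q * q ^ l) * (1 - c * q ^ l)) * z.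

Lemma T2_S a b c z l : qpoch c q (S l) <> 0 -> T2 a b c z (S l) = rat2 a b c z l * T2 a b c z l.
Proof. intros Hc. unfold T2, rat2. rewrite !qpochS in *. rewrite Cpow_S.
  assert (qpoch q q l <> 0) by apply qq_nz.
  assert (1 - q * q ^ l <> 0) by (assert (T := qq_nz (S l)); rewrite qpochS in T; intro E; apply T; rewrite E; ring).
  assert (qpoch c q l <> 0) by (intro E; apply Hc; rewrite E; ring).
  assert (1 - c * q ^ l <> 0) by (intro E; apply Hc; rewrite E; ring).
  field. repeat split; auto. Qed.

Lemma T2_abs a b c z : (Cmod z < 1)%R -> (forall k, qpoch c q k <> 0) -> ex_series (fun n => Cmod (T2 a b c z n)).
Proof.
  intros Hz Hc. apply ratio_cv with (rat2 a b c z) z. exact Hz.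
  - assert (Hden : forall n, (1 - q * q ^ n) * (1 - c * q ^ n) <> 0).
    { intros n. apply Cmult_neq_0.
      + assert (T := qq_nz (S n)). rewrite qpochS in T. intro E; apply T; rewrite E; ring.
      + assert (T := Hc (S n)). rewrite qpochS in T. intro E; apply T; rewrite E; ring. }
    assert (H1 := cv_mult _ _ _ _ (cv_mult _ _ _ _ (cv_mult _ _ _ _ (cv_lin a) (cv_lin b))
       (cv_inv _ _ (Cmult_neq_0 _ _ C1_neq_0 C1_neq_0) Hden (cv_mult _ _ _ _ (cv_lin q) (cv_lin c)))) (cv_const z)).
    replace (1 * 1 * / (1 * 1) * z) with z in H1 by (field; apply C1_neq_0).
    eapply cv_ext; [|exact H1]. intros n. reflexivity.
  - intros l. apply T2_S. apply Hc.
Qed.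

Lemma qpoch_lower (x : C) l : (1 - Cmod x * (1 - Cmod q ^ l) / (1 - Cmod q) <= Cmod (qpoch x q l))%R.
Proof.
  set (r := Cmod q). assert (Hr : (0 < r < 1)%R) by (unfold r; lra).
  assert (Hx : (0 <= Cmod x)%R) by apply Cmod_ge_0.
  induction l.
  - simpl. rewrite Cmod_1. replace (1 - 1)%R with 0%R by ring. unfold Rdiv. rewrite Rmult_0_r, Rmult_0_l. lra.
  - rewrite qpochS, Cmod_mult.
    assert (F : (1 - Cmod x * r ^ l <= Cmod (1 - x * q ^ l))%R).
    { assert (T := Cmod_rev_tri 1 (x * q ^ l)). rewrite Cmod_1, Cmod_mult, Cmod_pow in T. exact T. }
    assert (E : (1 - Cmod x * (1 - r ^ S l) / (1 - r) = (1 - Cmod x * (1 - r ^ l) / (1 - r)) - Cmod x * r ^ l)%R)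
      by (simpl; field; lra).
    rewrite E. set (A := (1 - Cmod x * (1 - r ^ l) / (1 - r))%R) in *.
    assert (HA : (A <= 1)%R).
    { unfold A. assert (0 <= r ^ l <= 1)%R by (apply rpow_le1; lra).
      assert (0 <= Cmod x * (1 - r ^ l) / (1 - r))%R.
      { unfold Rdiv. apply Rmult_le_pos. apply Rmult_le_pos; lra. left; apply Rinv_0_lt_compat; lra. }
      lra. }
    assert (Hp : (0 <= Cmod x * r ^ l)%R) by (apply Rmult_le_pos; [lra| apply pow_le; lra]).
    assert (Cmod (qpoch x q l) * Cmod (1 - x * q ^ l) >= 0)%R by (apply Rle_ge, Rmult_le_pos; apply Cmod_ge_0).
    destruct (Rle_lt_dec A 0). lra.
    destruct (Rle_lt_dec (1 - Cmod x * r ^ l) 0). lra.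
    apply Rle_trans with (A * (1 - Cmod x * r ^ l))%R. nra.
    apply Rmult_le_compat; lra.
Qed.

Lemma qpoch_half (x : C) l : (Cmod x <= (1 - Cmod q) / 2)%R -> (/ 2 <= Cmod (qpoch x q l))%R.
Proof.
  intros H. eapply Rle_trans; [|apply qpoch_lower].
  assert (0 <= Cmod q ^ l <= 1)%R by (apply rpow_le1; lra).
  assert (Hx : (0 <= Cmod x)%R) by apply Cmod_ge_0.
  assert (Cmod x * (1 - Cmod q ^ l) / (1 - Cmod q) <= / 2)%R.
  { apply Rmult_le_reg_r with (1 - Cmod q)%R. lra. unfold Rdiv. rewrite Rmult_assoc, Rinv_l by lra.
    nra. }
  lra.
Qed.

End Q.

Section G.
Variable q : C.
Hypothesis Hq0 : (0 < Cmod q)%R.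
Hypothesis Hq1 : (Cmod q < 1)%R.
Variables a b : C.
Hypothesis Ha : a <> 0.
Hypothesis Hb : b <> 0.

Definition gtm (c : C) := T2 q a b c (c / (a * b)).

Lemma contig (c S1 : C) : (forall k, qpoch c q k <> 0) -> (Cmod (c / (a * b)) < 1)%R ->
  1 - c / (a * b) <> 0 -> ser (gtm (c * q)) S1 ->
  ser (gtm c) ((1 - c / a) * (1 - c / b) / ((1 - c) * (1 - c / (a * b))) * S1).
Proof.
  intros Hc Hz Hz1 HS.
  set (K := (1 - c / a) * (1 - c / b) / ((1 - c) * (1 - c / (a * b)))).
  set (D := fun l => gtm c l * ((1 - q ^ l) / (1 - c / (a * b)))).
  assert (HD : cv D 0).
  { assert (H1 : cv (fun l => 1 - q ^ l) 1).
    { apply cv_ext with (fun l => 1 - 1 * q ^ l). intros; ring. apply cv_lin; auto. }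
    assert (H2 := cv_mult _ _ _ _ (ser_term0 _ (T2_abs q Hq0 Hq1 a b c (c / (a * b)) Hz Hc))
      (cv_mult _ _ _ _ H1 (cv_const (/ (1 - c / (a * b)))))).
    replace (0 * (1 * / (1 - c / (a * b)))) with (RtoC 0) in H2 by ring.
    eapply cv_ext; [|exact H2]. intros l. unfold D, gtm. reflexivity. }
  assert (H := ser_plus _ _ _ _ (ser_scal _ _ K HS) (ser_telescope D HD)).
  assert (E0 : D 0%nat = 0). { unfold D. change (q ^ 0) with (RtoC 1). unfold Cdiv. ring. }
  rewrite E0, Cplus_0_r in H. eapply ser_ext; [|exact H]. intros l. unfold D.
  assert (Hc1 : 1 - c <> 0). { assert (T := Hc 1%nat). rewrite qpochS, qpoch0 in T. simpl in T.
    intro E; apply T. replace (c * 1) with c by ring. rewrite E; ring. }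
  unfold gtm. rewrite (T2_S q Hq1) by apply Hc. unfold T2, rat2.
  assert (Ecq : qpoch (c * q) q l * (1 - c) = qpoch c q l * (1 - c * q ^ l)).
  { rewrite <- qpochS. replace (S l) with (1 + l)%nat by lia. rewrite qpoch_add, Cpow_1_r, qpochS, qpoch0.
    change (q ^ 0) with (RtoC 1). ring. }
  assert (Hql : qpoch q q l <> 0) by (apply (qq_nz q Hq1)).
  assert (Hcl : qpoch c q l <> 0) by apply Hc.
  assert (Hcl1 : 1 - c * q ^ l <> 0).
  { assert (T := Hc (S l)). rewrite qpochS in T. intro E; apply T; rewrite E; ring. }
  assert (Hqq : 1 - q * q ^ l <> 0).
  { assert (T := qq_nz q Hq1 (S l)). rewrite qpochS in T. intro E; apply T; rewrite E; ring. }
  assert (Hcq : qpoch (c * q) q l = qpoch c q l * (1 - c * q ^ l) / (1 - c)) by (rewrite <- Ecq; field; auto).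
  rewrite Hcq. replace (c * q / (a * b)) with (c / (a * b) * q) by (field; auto).
  rewrite Cpow_mult_l. unfold K.
  assert (Hab : a * b - c <> 0).
  { intro E. apply Hz1. replace c with (a * b) by (replace c with (a * b - (a * b - c)) by ring; rewrite E; ring).
    field. auto. }
  rewrite Cpow_S. field. repeat split; auto.
Qed.

Definition Kp (c : C) (n : nat) := qpoch (c / a) q n * qpoch (c / b) q n / (qpoch c q n * qpoch (c / (a * b)) q n).

Lemma qpoch_shift_nz (c : C) n k : qpoch c q (n + k) <> 0 -> qpoch (c * q ^ n) q k <> 0.
Proof. intros H E. apply H. rewrite qpoch_add, E. ring. Qed.

Lemma Cmod_shift_lt (c : C) n : (Cmod (c / (a * b)) < 1)%R -> (Cmod (c * q ^ n / (a * b)) < 1)%R.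
Proof. intros H. replace (c * q ^ n / (a * b)) with (c / (a * b) * q ^ n) by (field; auto).
  rewrite Cmod_mult, Cmod_pow. assert (0 <= Cmod q ^ n <= 1)%R by (apply rpow_le1; lra).
  assert (0 <= Cmod (c / (a * b)))%R by apply Cmod_ge_0. nra. Qed.

Lemma iter (c : C) : (forall k, qpoch c q k <> 0) -> (forall k, 1 - c / (a * b) * q ^ k <> 0) ->
  (Cmod (c / (a * b)) < 1)%R -> forall n S0, ser (gtm (c * q ^ n)) S0 -> ser (gtm c) (Kp c n * S0).
Proof.
  intros Hc Hcab Hz. induction n; intros S0 HS.
  - replace (c * q ^ 0) with c in HS by (change (q ^ 0) with (RtoC 1); ring).
    unfold Kp. rewrite !qpoch0. replace (1 * 1 / (1 * 1) * S0) with S0 by (field; apply C1_neq_0). exact HS.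
  - replace (c * q ^ S n) with (c * q ^ n * q) in HS by (rewrite Cpow_S; ring).
    assert (Hc1 : 1 - c * q ^ n <> 0).
    { assert (T := Hc (S n)). rewrite qpochS in T. intro E; apply T; rewrite E; ring. }
    assert (Hz1 : 1 - c * q ^ n / (a * b) <> 0).
    { replace (c * q ^ n / (a * b)) with (c / (a * b) * q ^ n) by (field; auto). apply Hcab. }
    assert (H := contig (c * q ^ n) S0 (fun k => qpoch_shift_nz c n k (Hc (n + k)%nat)) (Cmod_shift_lt c n Hz) Hz1 HS).
    apply IHn in H.
    assert (Hcabn : qpoch (c / (a * b)) q n <> 0) by (apply qpoch_nz; intros; apply Hcab).
    assert (Hcn : qpoch c q n <> 0) by apply Hc.
    replace (Kp c (S n) * S0) with (Kp c n * ((1 - c * q ^ n / a) * (1 - c * q ^ n / b) /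
      ((1 - c * q ^ n) * (1 - c * q ^ n / (a * b))) * S0)). exact H.
    unfold Kp. rewrite !qpochS.
    assert (1 - c / (a * b) * q ^ n <> 0) by apply Hcab.
    assert (a * b - c * q ^ n <> 0).
    { intro E. apply Hz1. replace (c * q ^ n) with (a * b) by
        (replace (c * q ^ n) with (a * b - (a * b - c * q ^ n)) by ring; rewrite E; ring). field. auto. }
    field. repeat split; auto.
Qed.

Lemma qpoch_0 k : qpoch 0 q k = 1.
Proof. induction k. reflexivity. rewrite qpochS, IHk. ring. Qed.

Lemma gauss (c P : C) : (forall k, qpoch c q k <> 0) -> (forall k, 1 - c / (a * b) * q ^ k <> 0) ->
  (Cmod (c / (a * b)) < 1)%R -> cv (Kp c) P -> ser (gtm c) P.
Proof.
  intros Hc Hcab Hz HP.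
  assert (Hex : forall n, exists S, ser (gtm (c * q ^ n)) S).
  { intros n. apply ser_exists. apply T2_abs; auto. apply Cmod_shift_lt; auto.
    intros k. apply qpoch_shift_nz. apply Hc. }
  destruct (ser_exists (gtm c)) as [L HL]. apply T2_abs; auto.
  set (Sq := fun n => proj1_sig (constructive_indefinite_description _ (Hex n))).
  assert (HS : forall n, ser (gtm (c * q ^ n)) (Sq n)).
  { intros n. unfold Sq. destruct (constructive_indefinite_description _ (Hex n)). simpl. exact s. }
  assert (HLn : forall n, L = Kp c n * Sq n).
  { intros n. eapply ser_unique. exact HL. apply iter; auto. }
  assert (HS1 : cv Sq 1).
  { set (z := c / (a * b)). set (r := Cmod q). set (M := T2 q a b 0 z).
    assert (HM : ex_series (fun l => Cmod (M l))).
    { apply T2_abs; auto. intros k. rewrite qpoch_0. apply C1_neq_0. }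
    destruct HM as [Sm HSm].
    assert (Hr : (0 < r < 1)%R) by (unfold r; lra).
    assert (Hgeom := is_lim_seq_geom r). rewrite Rabs_pos_eq in Hgeom by lra.
    specialize (Hgeom (proj2 Hr)).
    assert (He : (0 < (1 - r) / (2 * (Cmod c + 1)))%R).
    { assert (0 <= Cmod c)%R by apply Cmod_ge_0. apply Rdiv_lt_0_compat; lra. }
    assert (Hg2 := proj2 (is_lim_seq_spec _ _) Hgeom (mkposreal _ He)). destruct Hg2 as [N0 HN0].
    apply lim0_le_loc with (fun n => 2 * Sm * r ^ n)%R.
    2:{ replace 0%R with (2 * Sm * 0)%R by ring. apply is_lim_seq_mult'. apply is_lim_seq_const. exact Hgeom. }
    exists N0. intros n Hn. split. apply Cmod_ge_0.
    assert (Hsmall : (Cmod (c * q ^ n) <= (1 - r) / 2)%R).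
    { specialize (HN0 n Hn). simpl in HN0. rewrite Rminus_0_r, Rabs_pos_eq in HN0 by (apply pow_le; lra).
      rewrite Cmod_mult, Cmod_pow. fold r. assert (0 <= Cmod c)%R by apply Cmod_ge_0.
      apply Rle_trans with (Cmod c * ((1 - r) / (2 * (Cmod c + 1))))%R.
      apply Rmult_le_compat_l; lra.
      apply Rmult_le_reg_r with (2 * (Cmod c + 1))%R. lra.
      unfold Rdiv. replace (Cmod c * ((1 - r) * / (2 * (Cmod c + 1))) * (2 * (Cmod c + 1)))%R with (Cmod c * (1 - r))%R
        by (field; lra). nra. }
    set (dl := fun l : nat => match l with O => RtoC 1 | _ => RtoC 0 end).
    assert (Hd : ser dl 1).
    { assert (T := ser_finite dl 1). simpl in T. replace (0 + 1) with (RtoC 1) in T by ring. apply T.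
      intros k Hk. destruct k. lia. reflexivity. }
    assert (He1 := ser_plus _ _ _ _ (HS n) (ser_scal _ _ (-1) Hd)).
    replace (Sq n + -1 * 1) with (Sq n - 1) in He1 by ring.
    replace (2 * Sm * r ^ n)%R with (2 * r ^ n * Sm)%R by ring.
    apply (norm_bound _ _ (fun l => 2 * r ^ n * Cmod (M l))%R _ He1).
    + intros l. destruct l.
      * unfold dl, gtm, T2. rewrite !qpoch0. change ((c * q ^ n / (a * b)) ^ 0) with (RtoC 1).
        replace (1 * 1 / (1 * 1) * 1 + -1 * 1) with (RtoC 0) by (field; apply C1_neq_0).
        rewrite Cmod_0. apply Rmult_le_pos. apply Rmult_le_pos. lra. apply pow_le; lra. apply Cmod_ge_0.
      * unfold dl. replace (gtm (c * q ^ n) (S l) + -1 * 0) with (gtm (c * q ^ n) (S l)) by ring.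
        assert (Hq2 := qpoch_half q Hq0 Hq1 (c * q ^ n) (S l) Hsmall).
        assert (Eg : gtm (c * q ^ n) (S l) * qpoch (c * q ^ n) q (S l) = M (S l) * (q ^ n) ^ (S l)).
        { unfold gtm, M, T2. rewrite qpoch_0. unfold z.
          replace (c * q ^ n / (a * b)) with (c / (a * b) * q ^ n) by (field; auto).
          rewrite Cpow_mult_l. field. repeat split; first [apply (qq_nz q Hq1) | apply qpoch_shift_nz; apply Hc]. }
        assert (Eg2 := f_equal Cmod Eg). rewrite !Cmod_mult, !Cmod_pow in Eg2. fold r in Eg2.
        assert (0 <= Cmod (gtm (c * q ^ n) (S l)))%R by apply Cmod_ge_0.
        assert (0 <= Cmod (M (S l)))%R by apply Cmod_ge_0.
        assert (Hp : ((r ^ n) ^ S l <= r ^ n)%R).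
        { simpl. assert (0 <= (r ^ n) ^ l <= 1)%R by (apply rpow_le1; split; [apply pow_le; lra| apply rpow_le1; lra]).
          assert (0 <= r ^ n)%R by (apply pow_le; lra). nra. }
        assert (0 <= (r ^ n) ^ S l)%R by (apply pow_le; apply pow_le; lra).
        nra.
    + apply (@is_series_scal_l R_AbsRing R_NormedModule). exact HSm. }
  assert (T := cv_mult _ _ _ _ HP HS1).
  assert (T2' : cv (fun _ => L) (P * 1)). { eapply cv_ext; [|exact T]. intros n. simpl. now rewrite (HLn n). }
  assert (E : L = P * 1) by (eapply cv_unique; [apply cv_const| exact T2']).
  rewrite Cmult_1_r in E. rewrite <- E. exact HL.
Qed.
End G.

Lemma qpoch_zero x q n i : (i < n)%nat -> 1 - x * q ^ i = 0 -> qpoch x q n = 0.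
Proof. intros Hi E. induction n. lia. rewrite qpochS. destruct (Nat.eq_dec i n).
  subst. rewrite E. ring. rewrite IHn by lia. ring. Qed.

Lemma psum_mult_r (f : nat -> C) c n : psum (fun j => f j * c) n = psum f n * c.
Proof. induction n; simpl. ring. rewrite IHn. ring. Qed.

Section A.
Variable q : C.
Hypothesis Hq0 : (0 < Cmod q)%R.
Hypothesis Hq1 : (Cmod q < 1)%R.

Lemma qn0 : q <> 0.
Proof. apply q_nz. exact Hq0. Qed.

Lemma qpow_nz n : q ^ n <> 0.
Proof. apply Cpow_nz. apply qn0. Qed.

Lemma inv_qpow_ne1 n : 1 - / q ^ (S n) <> 0.
Proof. intros E. assert (E2 : q ^ S n = 1).
  { assert (H := qpow_nz (S n)). replace (q ^ S n) with (/ (/ q ^ S n)) by (field; auto).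
    replace (/ q ^ S n) with (RtoC 1) by (replace (/ q ^ S n) with (1 - (1 - / q ^ S n)) by ring; rewrite E; ring).
    field; try apply C1_neq_0. }
  assert (T := f_equal Cmod E2). rewrite Cmod_pow, Cmod_1 in T.
  assert (T2 := pow_lt_1_compat (Cmod q) (S n)). assert (0 <= Cmod q)%R by apply Cmod_ge_0.
  destruct T2. lra. lia. lra. Qed.

Lemma qpoch_rev (x : C) j : qpoch (x / q ^ S j) q (S j) = (1 - x / q ^ S j) * qpoch (x / q ^ j) q j.
Proof. replace (S j) with (1 + j)%nat at 2 by lia. rewrite qpoch_add, qpochS, qpoch0, Cpow_1_r.
  change (q ^ 0) with (RtoC 1). replace (x / q ^ S j * q) with (x / q ^ j).
  ring. rewrite Cpow_S. field. split; [apply qpow_nz| apply qn0]. Qed.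

Lemma qpoch_invq_nz j : qpoch (/ q ^ j) q j <> 0.
Proof. induction j. rewrite qpoch0. apply C1_neq_0.
  replace (/ q ^ S j) with (1 / q ^ S j) by (field; apply qpow_nz).
  rewrite qpoch_rev. replace (1 / q ^ j) with (/ q ^ j) by (field; apply qpow_nz).
  replace (1 / q ^ S j) with (/ q ^ S j) by (field; apply qpow_nz).
  apply Cmult_neq_0. apply inv_qpow_ne1. exact IHj. Qed.

Lemma phi_id (t : C) j : t <> 0 ->
  t ^ j * qpoch (/ q ^ j) q j * qpoch (q / t) q j = qpoch q q j * qpoch (t / q ^ j) q j.
Proof. intros Ht. induction j.
  - rewrite !qpoch0. change (t ^ 0) with (RtoC 1). ring.
  - replace (/ q ^ S j) with (1 / q ^ S j) by (field; apply qpow_nz).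
    rewrite !qpoch_rev, !qpochS. replace (1 / q ^ j) with (/ q ^ j) by (field; apply qpow_nz).
    rewrite !Cpow_S.
    transitivity ((t ^ j * qpoch (/ q ^ j) q j * qpoch (q / t) q j) * (t * (1 - 1 / (q * q ^ j)) * (1 - q / t * q ^ j))).
    unfold Cdiv. ring. rewrite IHj. assert (q ^ j <> 0) by apply qpow_nz. assert (q <> 0) by apply qn0.
    field. auto.
Qed.

Lemma shift_rel (y : C) j : qpoch (y / q) q j * (1 - y / q * q ^ j) = (1 - y / q) * qpoch y q j.
Proof. rewrite <- qpochS. replace (S j) with (1 + j)%nat by lia. rewrite qpoch_add, qpochS, qpoch0, Cpow_1_r.
  change (q ^ 0) with (RtoC 1). replace (y / q * q) with y by (field; apply qn0). ring. Qed.

Lemma Bl j l : qpoch (/ q ^ (l + j)) q j * qpoch q q l * (q ^ j) ^ l =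
  qpoch q q (l + j) * qpoch (/ q ^ j) q j / qpoch q q j.
Proof.
  assert (Hqj : qpoch q q j <> 0) by (apply qq_nz; exact Hq1).
  induction l.
  - rewrite Nat.add_0_l, qpoch0. change ((q ^ j) ^ 0) with (RtoC 1). field. exact Hqj.
  - assert (E := shift_rel (/ q ^ (l + j)) j).
    replace (/ q ^ (l + j) / q) with (/ q ^ (S l + j)) in E by (rewrite Nat.add_succ_l, Cpow_S; field; split; [apply qpow_nz|apply qn0]).
    assert (Hne : 1 - / q ^ (S l + j) * q ^ j <> 0).
    { replace (/ q ^ (S l + j) * q ^ j) with (/ q ^ S l) by (rewrite Cpow_add_r; field; split; apply qpow_nz). apply inv_qpow_ne1. }
    assert (E' : qpoch (/ q ^ (S l + j)) q j = (1 - / q ^ (S l + j)) * qpoch (/ q ^ (l + j)) q j / (1 - / q ^ (S l + j) * q ^ j))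
      by (rewrite <- E; unfold Cdiv; rewrite <- Cmult_assoc, Cinv_r by exact Hne; ring).
    rewrite E'. rewrite qpochS. simpl (S l + j)%nat. rewrite qpochS.
    transitivity ((1 - / q ^ S (l + j)) * (1 - q * q ^ l) * q ^ j / (1 - / q ^ S (l + j) * q ^ j) * (qpoch (/ q ^ (l + j)) q j * qpoch q q l * (q ^ j) ^ l)).
    { rewrite (Cpow_S (q ^ j)). unfold Cdiv. ring. }
    rewrite IHl. rewrite !Cpow_S, !Cpow_add_r.
    assert (q ^ l <> 0) by apply qpow_nz. assert (q ^ j <> 0) by apply qpow_nz. assert (q <> 0) by apply qn0.
    assert (1 - / (q * (q ^ l * q ^ j)) * q ^ j <> 0).
    { replace (/ (q * (q ^ l * q ^ j)) * q ^ j) with (/ q ^ S l) by (rewrite Cpow_S; field; auto). apply inv_qpow_ne1. }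
    assert (Hql : q * q ^ l - 1 <> 0).
    { assert (T := qq_nz q Hq1 (S l)). rewrite qpochS in T. intro E0; apply T.
      replace (1 - q * q ^ l) with (- (q * q ^ l - 1)) by ring. rewrite E0. ring. }
    field. repeat split; auto.
Qed.
End A.

Section E.
Variable q d : C.
Hypothesis Hq0 : (0 < Cmod q)%R.
Hypothesis Hq1 : (Cmod q < 1)%R.
Hypothesis Hd : forall j, qpoch d q j <> 0.

Definition Cc (m j : nat) : C := qpoch (/ q ^ m) q j * q ^ j / (qpoch q q j * qpoch d q j).

Lemma Cc_last m : Cc m (S m) = 0.
Proof. unfold Cc. rewrite (qpoch_zero _ _ _ m). unfold Cdiv; ring. lia.
  field. apply qpow_nz; auto. Qed.

Lemma qpoch_invS m j : qpoch (/ q ^ S m) q (S j) = (1 - / q ^ S m) * qpoch (/ q ^ m) q j.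
Proof. replace (S j) with (1 + j)%nat by lia. rewrite qpoch_add, qpochS, qpoch0, Cpow_1_r.
  change (q ^ 0) with (RtoC 1). replace (/ q ^ S m * q) with (/ q ^ m).
  ring. rewrite Cpow_S. field. split; [apply qpow_nz; auto| apply qn0; auto]. Qed.

Lemma part m (x : C) n : x <> 0 ->
  psum (fun j => Cc m j * x ^ m * qpoch (/ x) q j * (1 - d * q ^ m * x)) (S n) =
  (1 - d * q ^ m) * psum (fun j => Cc (S m) j * (x ^ S m * qpoch (/ x) q j)) (S n)
  - Cc m n / q ^ n * (x ^ S m * qpoch (/ x) q (S n)).
Proof.
  intros Hx. assert (Hqn : q <> 0) by (apply qn0; auto).
  induction n.
  - cbn [psum]. unfold Cc. rewrite !qpochS, !qpoch0. change (q ^ 0) with (RtoC 1). change (x ^ 0) with (RtoC 1).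
    rewrite Cpow_S. field. repeat split; auto.
  - change (psum (fun j => Cc m j * x ^ m * qpoch (/ x) q j * (1 - d * q ^ m * x)) (S (S n)))
      with (psum (fun j => Cc m j * x ^ m * qpoch (/ x) q j * (1 - d * q ^ m * x)) (S n)
            + Cc m (S n) * x ^ m * qpoch (/ x) q (S n) * (1 - d * q ^ m * x)).
    change (psum (fun j => Cc (S m) j * (x ^ S m * qpoch (/ x) q j)) (S (S n)))
      with (psum (fun j => Cc (S m) j * (x ^ S m * qpoch (/ x) q j)) (S n) + Cc (S m) (S n) * (x ^ S m * qpoch (/ x) q (S n))).
    rewrite IHn.
    unfold Cc. rewrite qpoch_invS. rewrite !qpochS. rewrite !Cpow_S.
    assert (HQ : qpoch q q n <> 0) by (apply qq_nz; auto).
    assert (HD := Hd n). assert (HDS := Hd (S n)). rewrite qpochS in HDS.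
    assert (HQS := qq_nz q Hq1 (S n)). rewrite qpochS in HQS.
    assert (1 - q * q ^ n <> 0) by (intro E; apply HQS; rewrite E; ring).
    assert (1 - d * q ^ n <> 0) by (intro E; apply HDS; rewrite E; ring).
    assert (q ^ n <> 0) by (apply qpow_nz; auto). assert (q ^ m <> 0) by (apply qpow_nz; auto).
    field. repeat split; auto.
Qed.

Lemma expand m (x : C) : x <> 0 ->
  qpoch (d * x) q m / qpoch d q m = psum (fun j => Cc m j * x ^ m * qpoch (/ x) q j) (S m).
Proof.
  intros Hx. induction m.
  - cbn [psum]. unfold Cc. rewrite !qpoch0. change (q ^ 0) with (RtoC 1). change (x ^ 0) with (RtoC 1).
    field; try apply C1_neq_0.
  - assert (Hdm := Hd (S m)). rewrite qpochS in Hdm.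
    assert (H1 : 1 - d * q ^ m <> 0) by (intro E; apply Hdm; rewrite E; ring).
    assert (H2 : qpoch d q m <> 0) by apply Hd.
    transitivity (qpoch (d * x) q m / qpoch d q m * (1 - d * q ^ m * x) / (1 - d * q ^ m)).
    { rewrite !qpochS. field. split; auto. }
    rewrite IHm, <- psum_mult_r.
    assert (P := part m x (S m) Hx). rewrite Cc_last in P.
    change (psum (fun j => Cc m j * x ^ m * qpoch (/ x) q j * (1 - d * q ^ m * x)) (S (S m)))
      with (psum (fun j => Cc m j * x ^ m * qpoch (/ x) q j * (1 - d * q ^ m * x)) (S m)
            + Cc m (S m) * x ^ m * qpoch (/ x) q (S m) * (1 - d * q ^ m * x)) in P.
    rewrite Cc_last in P.
    replace (psum (fun j => Cc m j * x ^ m * qpoch (/ x) q j * (1 - d * q ^ m * x)) (S m))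
      with ((1 - d * q ^ m) * psum (fun j => Cc (S m) j * (x ^ S m * qpoch (/ x) q j)) (S (S m))).
    2:{ lazymatch type of P with ?A + ?B = ?C - ?D =>
          symmetry; transitivity (A + B); [unfold Cdiv; ring | rewrite P; unfold Cdiv; ring] end. }
    replace (psum (fun j => Cc (S m) j * x ^ S m * qpoch (/ x) q j) (S (S m)))
      with (psum (fun j => Cc (S m) j * (x ^ S m * qpoch (/ x) q j)) (S (S m))).
    field. auto. apply psum_ext. intros; ring.
Qed.
End E.

Lemma cv_shift_fwd (u : nat -> C) (L : C) j : cv u L -> cv (fun n => u (n + j)%nat) L.
Proof. unfold cv. intros H. apply (is_lim_seq_incr_n (fun n => Cmod (u n - L)) j). exact H. Qed.

Lemma psum_mult_l (f : nat -> C) c n : psum (fun j => c * f j) n = c * psum f n.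
Proof. induction n; simpl. ring. rewrite IHn. ring. Qed.

Section Main.
Variables q a b c d : C.
Variable m : nat.
Variables Pca Pcb Pc Pcab : C.
Hypothesis Hq0 : (0 < Cmod q)%R.
Hypothesis Hq1 : (Cmod q < 1)%R.
Hypothesis Ha : a <> 0.
Hypothesis Hb : b <> 0.
Hypothesis Hc0 : c <> 0.
Hypothesis Hc : forall k, qpoch c q k <> 0.
Hypothesis Hd : forall k, qpoch d q k <> 0.
Hypothesis Habq : forall k, (k <= m)%nat -> qpoch (a * b * q / c) q k <> 0.
Hypothesis Hz0 : (Cmod (c * / q ^ m / (a * b)) < 1)%R.
Hypothesis HPca : cv (qpoch (c / a) q) Pca.
Hypothesis HPcb : cv (qpoch (c / b) q) Pcb.
Hypothesis HPc : cv (qpoch c q) Pc.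
Hypothesis HPcab : cv (qpoch (c / (a * b)) q) Pcab.
Hypothesis HPc0 : Pc <> 0.
Hypothesis HPcab0 : Pcab <> 0.

Let w := c / (a * b).
Let P := Pca * Pcb / (Pc * Pcab).

Lemma qn : q <> 0.
Proof. apply (q_nz q Hq0). Qed.

Lemma w_nz : w <> 0.
Proof. unfold w. intro E. apply Hc0. replace c with (c / (a * b) * (a * b)) by (field; auto). rewrite E. ring. Qed.

Lemma L1 k : qpoch w q k <> 0.
Proof.
  intros E. apply HPcab0.
  assert (H := cv_shift_fwd _ _ k HPcab).
  assert (H2 : cv (fun n => qpoch (c / (a * b)) q (n + k)) 0).
  { eapply cv_ext; [|apply cv_const]. intros n. simpl. rewrite Nat.add_comm, qpoch_add. fold w. rewrite E. ring. }
  eapply cv_unique; eauto.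
Qed.

Lemma L2 j : (j <= m)%nat -> qpoch (w / q ^ j) q j <> 0.
Proof.
  intros Hj. assert (E := phi_id q Hq0 w j w_nz).
  intro E0. rewrite E0, Cmult_0_r in E.
  assert (Hne : w ^ j * qpoch (/ q ^ j) q j * qpoch (q / w) q j <> 0).
  { apply Cmult_neq_0. apply Cmult_neq_0. apply Cpow_nz, w_nz. apply qpoch_invq_nz; auto.
    replace (q / w) with (a * b * q / c) by (unfold w; field; auto). apply Habq; auto. }
  auto.
Qed.

Lemma Cmod_w_lt j : (j <= m)%nat -> (Cmod (w / q ^ j) < 1)%R.
Proof.
  intros Hj. eapply Rle_lt_trans; [|exact Hz0].
  replace (c * / q ^ m / (a * b)) with (w / q ^ m) by (unfold w; field; repeat split; auto; apply qpow_nz; auto).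
  assert (qpow_nz' := qpow_nz q Hq0).
  rewrite !Cmod_div by auto. rewrite !Cmod_pow.
  assert (0 <= Cmod w)%R by apply Cmod_ge_0.
  assert (H1 : (0 < Cmod q ^ m)%R) by (apply pow_lt; lra).
  assert (H2 : (Cmod q ^ m <= Cmod q ^ j)%R) by (apply rpow_anti; [lra|auto]).
  unfold Rdiv. apply Rmult_le_compat_l. auto. apply Rinv_le_contravar; auto.
Qed.

Lemma L4 j k : (j <= m)%nat -> 1 - w / q ^ j * q ^ k <> 0.
Proof.
  intros Hj. destruct (Nat.lt_ge_cases k j) as [Hk|Hk].
  - apply (qpoch_factor _ _ j). apply L2; auto. exact Hk.
  - replace k with (j + (k - j))%nat by lia. rewrite Cpow_add_r.
    replace (w / q ^ j * (q ^ j * q ^ (k - j))) with (w * q ^ (k - j)) by (field; apply qpow_nz; auto).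
    apply (qpoch_factor _ _ (S (k - j))). apply L1. lia.
Qed.

Lemma gauss_shift j : (j <= m)%nat ->
  ser (gtm q (a * q ^ j) (b * q ^ j) (c * q ^ j)) (P * qpoch c q j / qpoch (w / q ^ j) q j).
Proof.
  intros Hj. assert (Hqj : q ^ j <> 0) by (apply qpow_nz; auto).
  assert (Ew : c * q ^ j / (a * q ^ j * (b * q ^ j)) = w / q ^ j) by (unfold w; field; auto).
  apply gauss; auto.
  - apply Cmult_neq_0; auto.
  - apply Cmult_neq_0; auto.
  - intros k. apply qpoch_shift_nz. apply Hc.
  - intros k. rewrite Ew. apply L4; auto.
  - rewrite Ew. apply Cmod_w_lt; auto.
  - unfold Kp.
    replace (c * q ^ j / (a * q ^ j)) with (c / a) by (field; auto).
    replace (c * q ^ j / (b * q ^ j)) with (c / b) by (field; auto).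
    rewrite Ew.
    assert (Hcs : cv (fun n => qpoch (c * q ^ j) q n) (Pc / qpoch c q j)).
    { assert (H := cv_shift_fwd _ _ j HPc).
      assert (H2 := cv_mult _ _ _ _ H (cv_const (/ qpoch c q j))).
      eapply cv_ext; [|exact H2]. intros n. simpl. rewrite Nat.add_comm, qpoch_add. field. apply Hc. }
    assert (Hws : cv (fun n => qpoch (w / q ^ j) q n) (qpoch (w / q ^ j) q j * Pcab)).
    { apply cv_shift with j.
      assert (H := cv_mult _ _ _ _ (cv_const (qpoch (w / q ^ j) q j)) HPcab).
      eapply cv_ext; [|exact H]. intros n. simpl. rewrite Nat.add_comm, qpoch_add.
      replace (w / q ^ j * q ^ j) with (c / (a * b)) by (unfold w; field; auto). reflexivity. }
    assert (Hden : forall n, qpoch (c * q ^ j) q n * qpoch (w / q ^ j) q n <> 0).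
    { intros n. apply Cmult_neq_0. apply qpoch_shift_nz, Hc. apply qpoch_nz. intros; apply L4; auto. }
    assert (Hpc' : Pc / qpoch c q j <> 0).
    { intro E. apply HPc0. replace Pc with (Pc / qpoch c q j * qpoch c q j) by (field; apply Hc). rewrite E; ring. }
    assert (H := cv_mult _ _ _ _ (cv_mult _ _ _ _ HPca HPcb) (cv_inv _ _ (Cmult_neq_0 _ _ Hpc'
       (Cmult_neq_0 _ _ (L2 j Hj) HPcab0)) Hden (cv_mult _ _ _ _ Hcs Hws))).
    replace (P * qpoch c q j / qpoch (w / q ^ j) q j) with
      (Pca * Pcb * / (Pc / qpoch c q j * (qpoch (w / q ^ j) q j * Pcab))).
    eapply cv_ext; [|exact H]. intros n. reflexivity.
    unfold P. field. repeat split; auto. apply L2; auto.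
Qed.

Definition gam j := qpoch a q j * qpoch b q j * w ^ j * qpoch (/ q ^ j) q j / (qpoch q q j * qpoch c q j).

Lemma shiftT j l : T2 q a b c w (l + j) * qpoch (/ q ^ (l + j)) q j = gam j * gtm q (a * q ^ j) (b * q ^ j) (c * q ^ j) l.
Proof.
  assert (Hqj : q ^ j <> 0) by (apply qpow_nz; auto).
  assert (Ew : c * q ^ j / (a * q ^ j * (b * q ^ j)) = w / q ^ j) by (unfold w; field; auto).
  unfold gtm. rewrite Ew. unfold T2, gam.
  assert (EB := Bl q Hq0 Hq1 j l).
  assert (Hql : qpoch q q l <> 0) by (apply (qq_nz q Hq1)).
  assert (Hqjl : (q ^ j) ^ l <> 0) by (apply Cpow_nz; auto).
  assert (E1 : qpoch (/ q ^ (l + j)) q j = qpoch q q (l + j) * qpoch (/ q ^ j) q j / qpoch q q j / (qpoch q q l * (q ^ j) ^ l)).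
  { rewrite <- EB. field. auto. }
  rewrite E1.
  assert (Hqlj : qpoch q q (l + j) <> 0) by (apply (qq_nz q Hq1)).
  assert (Hcjl : qpoch (c * q ^ j) q l <> 0) by (apply qpoch_shift_nz, Hc).
  assert (Hcj : qpoch c q j <> 0) by apply Hc.
  assert (Hqj' : qpoch q q j <> 0) by (apply (qq_nz q Hq1)).
  rewrite (Nat.add_comm l j) in *. rewrite (qpoch_add a q j l), (qpoch_add b q j l), (qpoch_add c q j l).
  replace ((w / q ^ j) ^ l) with (w ^ l / (q ^ j) ^ l) by (unfold Cdiv; rewrite Cpow_mult_l, Cpow_inv by auto; ring).
  rewrite Cpow_add_r.
  field. repeat split; auto.
Qed.

Definition sj (j k : nat) := T2 q a b c w k * qpoch (/ q ^ k) q j.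

Lemma ser_sj j : (j <= m)%nat -> ser (sj j) (gam j * (P * qpoch c q j / qpoch (w / q ^ j) q j)).
Proof.
  intros Hj. apply ser_shift with (fun l => gam j * gtm q (a * q ^ j) (b * q ^ j) (c * q ^ j) l) j.
  - intros k Hk. unfold sj. rewrite (qpoch_zero (/ q ^ k) q j k Hk). ring.
    field. apply qpow_nz; auto.
  - intros l. unfold sj. apply shiftT.
  - apply ser_scal. apply gauss_shift; auto.
Qed.

Definition rt (j : nat) := phi32_term a b (/ q ^ m) (a * b * q / c) d q q j.

Lemma coef j : (j <= m)%nat -> Cc q d m j * (gam j * (P * qpoch c q j / qpoch (w / q ^ j) q j)) = P * rt j.
Proof.
  intros Hj. unfold rt, phi32_term, Cc, gam. replace (pow_n q j) with (q ^ j) by (symmetry; apply pn).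
  assert (E := phi_id q Hq0 w j w_nz).
  replace (q / w) with (a * b * q / c) in E by (unfold w; field; auto).
  assert (Hq' : qpoch q q j <> 0) by (apply (qq_nz q Hq1)).
  assert (E2 : qpoch (w / q ^ j) q j = w ^ j * qpoch (/ q ^ j) q j * qpoch (a * b * q / c) q j / qpoch q q j)
    by (rewrite E; field; auto).
  rewrite E2.
  assert (qpoch (a * b * q / c) q j <> 0) by (apply Habq; auto).
  assert (w ^ j <> 0) by (apply Cpow_nz, w_nz).
  assert (qpoch (/ q ^ j) q j <> 0) by (apply qpoch_invq_nz; auto).
  assert (qpoch c q j <> 0) by apply Hc. assert (qpoch d q j <> 0) by apply Hd.
  field. repeat split; auto.
Qed.

Lemma lhs_term k : phi32_term a b (d * q ^ m) c d q (c * / q ^ m / (a * b)) k =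
  psum (fun j => Cc q d m j * sj j k) (S m).
Proof.
  unfold phi32_term. replace (pow_n (c * / q ^ m / (a * b)) k) with ((c * / q ^ m / (a * b)) ^ k) by (symmetry; apply pn).
  assert (Hqk : q ^ k <> 0) by (apply qpow_nz; auto).
  assert (Hsw : qpoch (d * q ^ m) q k / qpoch d q k = qpoch (d * q ^ k) q m / qpoch d q m).
  { assert (E1 := qpoch_add d q m k). assert (E2 := qpoch_add d q k m). rewrite Nat.add_comm in E2.
    rewrite E1 in E2. assert (Hdm := Hd m). assert (Hdk := Hd k).
    transitivity (qpoch d q m * qpoch (d * q ^ m) q k / (qpoch d q k * qpoch d q m)).
    field; split; auto. rewrite E2. field; split; auto. }
  rewrite (expand q d Hq0 Hq1 Hd m (q ^ k) Hqk) in Hsw.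
  transitivity (qpoch a q k * qpoch b q k / (qpoch q q k * qpoch c q k) * (c * / q ^ m / (a * b)) ^ k
     * (qpoch (d * q ^ m) q k / qpoch d q k)).
  { assert (qpoch q q k <> 0) by (apply (qq_nz q Hq1)). assert (qpoch c q k <> 0) by apply Hc.
    assert (qpoch d q k <> 0) by apply Hd. field. repeat split; auto. }
  rewrite Hsw, <- psum_mult_l. apply psum_ext. intros j _. unfold sj, T2.
  assert (Ep : (c * / q ^ m / (a * b)) ^ k * (q ^ k) ^ m = w ^ k).
  { rewrite <- Cpow_mult_r, Nat.mul_comm, Cpow_mult_r, <- Cpow_mult_l. f_equal. unfold w. field.
    repeat split; try apply qpow_nz; auto. }
  rewrite <- Ep. ring.
Qed.

Theorem main_sec R : ser rt R -> ser (fun k => phi32_term a b (d * q ^ m) c d q (c * / q ^ m / (a * b)) k) (P * R).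
Proof.
  intros HR.
  assert (ER : R = psum rt (S m)).
  { eapply ser_unique. exact HR. apply ser_finite. intros k Hk. unfold rt, phi32_term.
    rewrite (qpoch_zero (/ q ^ m) q k m). unfold Cdiv. ring. lia. field. apply qpow_nz; auto. }
  assert (H := ser_fsum (fun j k => Cc q d m j * sj j k) (fun j => Cc q d m j * (gam j * (P * qpoch c q j / qpoch (w / q ^ j) q j))) (S m)).
  assert (H2 : ser (fun k => psum (fun j => Cc q d m j * sj j k) (S m))
            (psum (fun j => Cc q d m j * (gam j * (P * qpoch c q j / qpoch (w / q ^ j) q j))) (S m))).
  { (* only j <= m matter: use a truncated family *)
    assert (H3 := ser_fsum (fun j k => if Nat.leb j m then Cc q d m j * sj j k else 0)
                  (fun j => if Nat.leb j m then Cc q d m j * (gam j * (P * qpoch c q j / qpoch (w / q ^ j) q j)) else 0) (S m)).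
    assert (E1 : psum (fun j => if Nat.leb j m then Cc q d m j * (gam j * (P * qpoch c q j / qpoch (w / q ^ j) q j)) else 0) (S m)
      = psum (fun j => Cc q d m j * (gam j * (P * qpoch c q j / qpoch (w / q ^ j) q j))) (S m)).
    { apply psum_ext. intros j Hj. replace (Nat.leb j m) with true. reflexivity. symmetry. apply Nat.leb_le. lia. }
    rewrite <- E1. eapply ser_ext; [|apply H3].
    - intros k. apply psum_ext. intros j Hj. replace (Nat.leb j m) with true. reflexivity. symmetry. apply Nat.leb_le. lia.
    - intros j. destruct (Nat.leb j m) eqn:Ej.
      + apply ser_scal. apply ser_sj. apply Nat.leb_le. exact Ej.
      + unfold ser. eapply cv_ext; [|apply cv_const]. intros n. induction n; simpl. reflexivity. rewrite <- IHn. ring. }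
  clear H.
  replace (P * R) with (psum (fun j => Cc q d m j * (gam j * (P * qpoch c q j / qpoch (w / q ^ j) q j))) (S m)).
  eapply ser_ext; [|exact H2]. intros k. symmetry. apply lhs_term.
  rewrite ER, <- psum_mult_l. apply psum_ext. intros j Hj. apply coef. lia.
Qed.
End Main.


Theorem lemma2p3 (q a b c d : C) (m : nat)
  (Pca Pcb Pc Pcab R : C) :
  (0 < Cmod q)%R -> (Cmod q < 1)%R ->
  a <> 0 -> b <> 0 -> c <> 0 ->
  (forall k : nat, qpoch c q k <> 0) ->
  (forall k : nat, qpoch d q k <> 0) ->
  (forall k : nat, (k <= m)%nat -> qpoch (a * b * q / c) q k <> 0) ->
  (Cmod (c * / pow_n q m / (a * b)) < 1)%R ->
  is_qpoch_inf (c / a) q Pca ->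
  is_qpoch_inf (c / b) q Pcb ->
  is_qpoch_inf c q Pc ->
  is_qpoch_inf (c / (a * b)) q Pcab ->
  Pc <> 0 -> Pcab <> 0 ->
  is_series (phi32_term a b (/ pow_n q m) (a * b * q / c) d q q) R ->
  is_series (phi32_term a b (d * pow_n q m) c d q (c * / pow_n q m / (a * b)))
            (Pca * Pcb / (Pc * Pcab) * R).
Proof.
  intros Hq0 Hq1 Ha Hb Hc0 Hc Hd Habq Hz HPca HPcb HPc HPcab HPc0 HPcab0 HR.
  rewrite pn in Hz, HR |- *.
  apply ser_is_series. apply is_series_ser in HR.
  apply (main_sec q a b c d m Pca Pcb Pc Pcab); auto; apply filterlim_cv; assumption.
Qed.
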